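(* Let $X$ be an integral regular projective curve of genus $g$ over $\mathbb{F}_q$ and $\mathbf{n}_m$ a tuple of positive integers; write $Q=q_{\mathbf{n}_m}$. Let $P(T)=(1-T)(1-QT)T^{g-1}\widehat Z^{(\mathbf{n}_m)}_X(T)$, a polynomial of degree $2g$ in $T=T_{\mathbf{n}_m}$, assume $P(0)\neq0$, and write its reciprocal roots as $\alpha_1,\dots,\alpha_g,\beta_1,\dots,\beta_g$, i.e. $P(T)=P(0)\prod_{\ell=1}^g(1-\alpha_\ell T)(1-\beta_\ell T)$. Put $N_k=Q^k+1-\sum_{\ell=1}^g(\alpha_\ell^k+\beta_\ell^k)$ and define $b_k$ by $\exp\bigl(\sum_{k\ge1}\frac{N_k}{Q^k-1}\frac{x^k}{k}\bigr)=\sum_{k\ge0}b_kx^k$. Then, with $(Q;Q)_n=\prod_{j=1}^n(1-Q^j)$, $$b_k=\sum_{\substack{k_{0+},k_{0-},k_{1+},k_{1-},\dots,k_{g+},k_{g-}\ge0\\ k_{0+}+k_{0-}+\cdots+k_{g+}+k_{g-}=k}}\frac{(-1)^{k_{0+}+k_{0-}}Q^{\binom{k_{0+}+1}{2}+\binom{k_{0-}}{2}}}{(Q;Q)_{k_{0+}}(Q;Q)_{k_{0-}}}\prod_{\ell=1}^g\frac{\alpha_\ell^{k_{\ell+}}\beta_\ell^{k_{\ell-}}}{(Q;Q)_{k_{\ell+}}(Q;Q)_{k_{\ell-}}}.$$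
   Context: Let $\zeta_X(s)=\sum_{D\ge 0}N(D)^{-s}$ be the Artin zeta function of $X$ ($D$ running over effective divisors) and $\widehat\zeta_X(s)=q^{s(g-1)}\zeta_X(s)$ the complete Artin zeta function, a rational function of $q^{-s}$. Derived zeta functions are defined recursively. For the empty tuple $\mathbf{n}_{-1}=()$ put $q_{\mathbf{n}_{-1}}=q$, $T_{\mathbf{n}_{-1}}=q^{-s}$, $\widehat\zeta^{(\mathbf{n}_{-1})}_X=\widehat\zeta_X$. For a tuple $\mathbf{n}_m=(n_0,\dots,n_m)$ of positive integers ($m\ge 0$) put $\mathbf{n}_{m-1}=(n_0,\dots,n_{m-1})$, $q_{\mathbf{n}_m}=q^{n_0n_1\cdots n_m}$, $T_{\mathbf{n}_m}=q^{-n_0n_1\cdots n_m s}$. Writing $\widehat Z^{(\mathbf{n}_{m-1})}_X(T_{\mathbf{n}_{m-1}}):=\widehat\zeta^{(\mathbf{n}_{m-1})}_X(s)$ (a rational function of $T_{\mathbf{n}_{m-1}}$), set $\widehat\zeta^{(\mathbf{n}_{m-1})}_X(1):=\operatorname{Res}_{T_{\mathbf{n}_{m-1}}=1}\widehat Z^{(\mathbf{n}_{m-1})}_X(T_{\mathbf{n}_{m-1}})$ and for integers $N\ge 1$, $\widehat v_N:=\prod_{k=1}^{N}\widehat\zeta^{(\mathbf{n}_{m-1})}_X(k)$. Then $$\widehat\zeta^{(\mathbf{n}_m)}_X(s)=q_{\mathbf{n}_{m-1}}^{\binom{n_m}{2}(g-1)}\sum_{a=1}^{n_m}\Biggl(\sum_{\substack{k_1,\dots,k_p>0\\k_1+\cdots+k_p=n_m-a}}\frac{\widehat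 v_{k_1}\cdots\widehat v_{k_p}}{\prod_{j=1}^{p-1}(1-q_{\mathbf{n}_{m-1}}^{k_j+k_{j+1}})}\cdot\frac{1}{1-q_{\mathbf{n}_{m-1}}^{n_ms-n_m+a+k_p}}\Biggr)\widehat\zeta^{(\mathbf{n}_{m-1})}_X(n_ms-n_m+a)\Biggl(\sum_{\substack{l_1,\dots,l_r>0\\l_1+\cdots+l_r=a-1}}\frac{1}{1-q_{\mathbf{n}_{m-1}}^{-n_ms+n_m-a+1+l_1}}\cdot\frac{\widehat v_{l_1}\cdots\widehat v_{l_r}}{\prod_{j=1}^{r-1}(1-q_{\mathbf{n}_{m-1}}^{l_j+l_{j+1}})}\Biggr),$$ where the inner sums run over ordered tuples of positive integers (of any length) with the indicated sum, and an inner sum over tuples summing to $0$ is defined to be $1$. One writes $\widehat Z^{(\mathbf{n}_m)}_X(T_{\mathbf{n}_m}):=\widehat\zeta^{(\mathbf{n}_m)}_X(s)$, a rational function of $T_{\mathbf{n}_m}$. (For $m=0$ this is the rank $n_0$ non-abelian zeta function.) *)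

(* Defs.v *)
From mathcomp Require Import all_boot all_order all_algebra all_field.
Set Implicit Arguments. Unset Strict Implicit. Unset Printing Implicit Defensive.
Import Order.TTheory GRing.Theory Num.Theory.
Local Open Scope ring_scope.

Definition qpoch (Q : algC) (n : nat) : algC :=
  \prod_(1 <= j < n.+1) (1 - Q ^+ j).

Definition Nk (Q : algC) (g : nat) (alpha beta : 'I_g -> algC) (k : nat) : algC :=
  Q ^+ k + 1 - \sum_(l < g) (alpha l ^+ k + beta l ^+ k).

Definition exp_arg (Q : algC) (g : nat) (alpha beta : 'I_g -> algC) (K : nat)
  : {poly algC} :=
  \sum_(1 <= i < K.+1) ((Nk Q alpha beta i / (Q ^+ i - 1)) / i%:R) *: 'X^i.

(* b_K = coefficient of x^K in the formal power series exp(A(x)) =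
   sum_j A(x)^j / j!; since A has no constant term, only j <= K and the
   terms of A of degree <= K contribute. *)
Definition bcoef (Q : algC) (g : nat) (alpha beta : 'I_g -> algC) (K : nat) : algC :=
  (\sum_(j < K.+1) (j`!%:R)^-1 *: (exp_arg Q alpha beta K) ^+ j)`_K.

(* An index tuple (k_{0+},k_{0-},...,k_{g+},k_{g-}) is a
   finite function f : 'I_g.+1 * bool -> 'I_K.+1, with f (l,true) = k_{l+} and
   f (l,false) = k_{l-}; l = 0 is the special index, and alpha_l, beta_l
   (l = 1..g) are alpha (l-1), beta (l-1), i.e. index lift ord0 l. *)
Definition bterm (Q : algC) (g : nat) (alpha beta : 'I_g -> algC) (K : nat)
  (f : {ffun 'I_g.+1 * bool -> 'I_K.+1}) : algC :=
  let kp (l : 'I_g.+1) : nat := f (l, true) in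
  let km (l : 'I_g.+1) : nat := f (l, false) in
  (-1) ^+ (kp ord0 + km ord0) * Q ^+ ('C(kp ord0 + 1, 2) + 'C(km ord0, 2))
    / (qpoch Q (kp ord0) * qpoch Q (km ord0))
  * \prod_(l < g) (alpha l ^+ kp (lift ord0 l) * beta l ^+ km (lift ord0 l)
                    / (qpoch Q (kp (lift ord0 l)) * qpoch Q (km (lift ord0 l)))).

Definition bsum (Q : algC) (g : nat) (alpha beta : 'I_g -> algC) (K : nat) : algC :=
  \sum_(f : {ffun 'I_g.+1 * bool -> 'I_K.+1} | (\sum_i (f i : nat))%N == K)
     bterm Q alpha beta f.

(* Main.v *)
Require Import Defs.
From mathcomp Require Import all_boot all_order all_algebra all_field.
From mathcomp Require Import ring zify.
Import GRing.Theory Num.Theory.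
Local Open Scope ring_scope.

Definition ode (K : nat) (p F : {poly algC}) :=
  forall n, (n < K)%N -> F^`()`_n = (p^`() * F)`_n.

Lemma natn_inj (x y : algC) n : x *+ n.+1 = y *+ n.+1 -> x = y.
Proof.
move=> h; have nz : (n.+1%:R : algC) != 0 by rewrite pnatr_eq0.
apply: (mulIf nz). rewrite !mulr_natr. exact: h.
Qed.

Lemma coefM_low K (A B C : {poly algC}) :
  (forall i, (i < K)%N -> A`_i = B`_i) ->
  forall n, (n < K)%N -> (A * C)`_n = (B * C)`_n.
Proof.
move=> H n nK; rewrite !coefM; apply: eq_bigr => i _; rewrite H //.
apply: leq_ltn_trans nK; rewrite -ltnS; exact: ltn_ord.
Qed.

Lemma ode_uniq K p F G : ode K p F -> ode K p G -> F`_0 = G`_0 ->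
  forall n, (n <= K)%N -> F`_n = G`_n.
Proof.
move=> HF HG H0.
suff: forall n, (n <= K)%N -> forall m, (m <= n)%N -> F`_m = G`_m.
  by move=> H n nK; apply: (H n nK).
elim=> [|n IH] nK m.
  by rewrite leqn0 => /eqP ->.
rewrite leq_eqVlt => /orP [/eqP ->|]; last first.
  by rewrite ltnS; apply: IH; apply: ltnW.
apply: (@natn_inj _ _ n); rewrite -!coef_deriv HF // HG // !coefM.
apply: eq_bigr => i _.
rewrite IH ?leq_subr //; exact: ltnW.
Qed.

Lemma ode_mul K p q F G : ode K p F -> ode K q G -> ode K (p + q) (F * G).
Proof.
move=> HF HG n nK.
rewrite derivM coefD (@coefM_low K _ _ _ HF) // [F * _]mulrC (@coefM_low K _ _ _ HG) // -coefD.
have -> : p^`() * F * G + q^`() * G * F = (p^`() + q^`()) * (F * G) by ring.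
by rewrite derivD.
Qed.

Lemma ode_prod K (I : finType) (ps Fs : I -> {poly algC}) :
  (forall i, ode K (ps i) (Fs i)) -> ode K (\sum_i ps i) (\prod_i Fs i).
Proof.
move=> H; apply: (big_rec2 (fun x y => ode K y x)).
  by move=> n _; rewrite raddf0 mul0r -polyC1 derivC.
by move=> i y1 y2 _ Hy; apply: ode_mul.
Qed.

Lemma pow_low (p : {poly algC}) K : p`_0 = 0 -> forall n, (n < K)%N -> (p ^+ K)`_n = 0.
Proof.
move=> p0; elim: K => [//|K IH] n nK.
rewrite exprS coefM big1 // => [[i ilt]] _ /=.
case: i ilt => [|i] ilt; first by rewrite p0 mul0r.
by rewrite IH ?mulr0 //; lia.
Qed.

Definition expT K (p : {poly algC}) := \sum_(j < K.+1) (j`!%:R)^-1 *: p ^+ j.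

Lemma expT_deriv K p : (expT K p)^`() =
   p^`() * expT K p - p^`() * ((K`!%:R)^-1 *: p ^+ K).
Proof.
rewrite /expT (@raddf_sum _ _ (@deriv _)) big_ord_recl /= expr0 derivZ -polyC1 derivC scaler0 add0r.
rewrite [in RHS]big_ord_recr /= mulrDr addrK mulr_sumr; apply: eq_bigr => i _.
rewrite derivZ deriv_exp /= factS natrM invfM.
rewrite -!mul_polyC -mulr_natl polyCM.
have h : ((i.+1)%:R^-1 * (i.+1)%:R : algC) = 1 by rewrite mulVf // pnatr_eq0.
have e : ((i.+1)%:R : {poly algC}) = ((i.+1)%:R : algC)%:P by rewrite rmorph_nat.
have -> : bump 0 i = i.+1 by [].
rewrite add0n !mulr1 -(mulr_natl (p^`() * p ^+ i) i.+1) e.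
set a := (i.+1%:R : algC); set b := (i`!%:R^-1 : algC).
have -> : (a^-1)%:P * b%:P * (a%:P * (p^`() * p ^+ i)) = ((a^-1 * a) * b)%:P * (p^`() * p ^+ i) by rewrite !polyCM; ring.
rewrite h mul1r; ring.
Qed.

Lemma ode_exp K (p : {poly algC}) : p`_0 = 0 -> ode K p (expT K p).
Proof.
move=> p0 n nK; rewrite expT_deriv coefB.
suff -> : (p^`() * ((K`!%:R)^-1 *: p ^+ K))`_n = 0 by rewrite subr0.
rewrite mulrC (@coefM_low K _ 0); first by rewrite mul0r coef0.
  by move=> i iK; rewrite coefZ (pow_low _ _ p0 _ iK) mulr0 coef0.
exact: nK.
Qed.

Lemma expT0 K (p : {poly algC}) : p`_0 = 0 -> (expT K p)`_0 = 1.
Proof.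
move=> p0; rewrite /expT coef_sum big_ord_recl /= big1.
  by rewrite addr0 expr0 coefZ coef1 /= fact0 invr1 mul1r.
by move=> i _; rewrite coefZ (pow_low _ _ p0 _ (ltn0Sn _)) mulr0.
Qed.

Lemma seq_ode (Q c : algC) (e : nat -> algC) :
  (forall k, Q ^+ k.+1 != 1) ->
  (forall n, (Q ^+ n.+1 - 1) * e n.+1 = c * Q ^+ n * e n) ->
  forall n, e n.+1 *+ n.+1 = \sum_(i < n.+1) c ^+ i.+1 / (Q ^+ i.+1 - 1) * e (n - i)%N.
Proof.
move=> HQ Hr.
have HQ' : forall k, Q ^+ k.+1 - 1 != 0 by move=> k; rewrite subr_eq0.
have H : forall n, \sum_(i < n.+1) c ^+ i.+1 * e (n - i)%N = c * Q ^+ n * e n.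
  elim=> [|n IH]; first by rewrite big_ord1 /= expr1 expr0 mulr1.
  rewrite big_ord_recl /= subn0.
  have -> : \sum_(i < n.+1) c ^+ (bump 0 i).+1 * e (n.+1 - bump 0 i)%N
          = c * \sum_(i < n.+1) c ^+ i.+1 * e (n - i)%N.
    rewrite mulr_sumr; apply: eq_bigr => i _.
    have -> : bump 0 i = i.+1 by [].
    by rewrite subSS exprS mulrA.
  rewrite IH -Hr; ring.
elim=> [|n IH].
  apply: (mulfI (HQ' 0%N)); rewrite big_ord1 /= mulr1n Hr expr0 mulr1.
  set d := Q ^+ 1 - 1; have dn : d != 0 by apply: HQ'.
  by rewrite mulrA mulrCA divff // mulr1.
set d := Q ^+ n.+2 - 1.
apply: (mulfI (HQ' n.+1)); rewrite mulrnAr Hr mulr_sumr.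
rewrite (eq_bigr (fun i : 'I_n.+2 =>
   c ^+ i.+1 / (Q ^+ i.+1 - 1) * Q ^+ i.+1 * ((Q ^+ (n.+1 - i)%N - 1) * e (n.+1 - i)%N)
   + c ^+ i.+1 * e (n.+1 - i)%N)); last first.
  move=> i _.
  have hi : (i <= n.+1)%N by rewrite -ltnS.
  have hQ : Q ^+ n.+2 = Q ^+ i.+1 * Q ^+ (n.+1 - i)%N by rewrite -exprD; congr (_ ^+ _); lia.
  rewrite /d hQ.
  have := HQ' i; set u := Q ^+ i.+1 - 1 => un.
  have -> : Q ^+ i.+1 = u + 1 by rewrite /u subrK.
  by field.
rewrite big_split /= H big_ord_recr /= subnn expr0 subrr mul0r mulr0 addr0.
rewrite (eq_bigr (fun i : 'I_n.+1 => c * Q ^+ n.+1 * (c ^+ i.+1 / (Q ^+ i.+1 - 1) * e (n - i)%N))); last first.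
  move=> i _.
  have hi : (i <= n)%N by rewrite -ltnS.
  have -> : (n.+1 - i = (n - i).+1)%N by lia.
  rewrite Hr.
  have hQ : Q ^+ n.+1 = Q ^+ i.+1 * Q ^+ (n - i)%N by rewrite -exprD; congr (_ ^+ _); lia.
  rewrite hQ; ring.
rewrite -mulr_sumr -IH mulrS mulrnAr; ring.
Qed.

Lemma ode_E K (Q c : algC) (e : nat -> algC) (p : {poly algC}) :
  (forall k, Q ^+ k.+1 != 1) ->
  (forall n, (Q ^+ n.+1 - 1) * e n.+1 = c * Q ^+ n * e n) ->
  (forall i, (i < K)%N -> p`_i.+1 *+ i.+1 = c ^+ i.+1 / (Q ^+ i.+1 - 1)) ->
  ode K p (\poly_(j < K.+1) e j).
Proof.
move=> HQ Hr Hp n nK.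
rewrite coef_deriv coef_poly ltnS nK (@seq_ode _ _ _ HQ Hr) coefM.
apply: eq_bigr => i _.
have iK : (i < K)%N by apply: leq_ltn_trans nK; rewrite -ltnS.
rewrite coef_deriv Hp // coef_poly.
have -> : (n - i < K.+1)%N by lia.
by [].
Qed.

Lemma qpochS Q n : qpoch Q n.+1 = qpoch Q n * (1 - Q ^+ n.+1).
Proof. by rewrite /qpoch big_nat_recr. Qed.

Lemma qpoch0 Q : qpoch Q 0 = 1.
Proof. by rewrite /qpoch big_geq. Qed.

Lemma qpoch_neq0 Q : (forall k, Q ^+ k.+1 != 1) -> forall n, qpoch Q n != 0.
Proof.
move=> HQ; elim=> [|n IH]; first by rewrite qpoch0 oner_neq0.
rewrite qpochS mulf_neq0 //; rewrite subr_eq0 eq_sym; exact: HQ.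
Qed.

Definition ecP (Q c : algC) n := (-1) ^+ n * c ^+ n * Q ^+ 'C(n, 2) / qpoch Q n.
Definition ecM (Q c : algC) n := c ^+ n / qpoch Q n.

Lemma recP (Q c : algC) : (forall k, Q ^+ k.+1 != 1) ->
  forall n, (Q ^+ n.+1 - 1) * ecP Q c n.+1 = c * Q ^+ n * ecP Q c n.
Proof.
move=> HQ n; rewrite /ecP qpochS binS bin1 exprD !exprS.
have h1 := @qpoch_neq0 Q HQ n.
have h2 : 1 - Q ^+ n.+1 != 0 by rewrite subr_eq0 eq_sym.
rewrite exprS in h2.
field.
by rewrite h1 h2.
Qed.

Lemma recM (Q c : algC) : Q != 0 -> (forall k, Q ^+ k.+1 != 1) ->
  forall n, ((Q^-1) ^+ n.+1 - 1) * ecM Q c n.+1 = (c / Q) * (Q^-1) ^+ n * ecM Q c n.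
Proof.
move=> Q0 HQ n; rewrite /ecM qpochS !exprVn !exprS.
have h1 := @qpoch_neq0 Q HQ n.
have h2 : 1 - Q ^+ n.+1 != 0 by rewrite subr_eq0 eq_sym.
have h3 : Q ^+ n != 0 by rewrite expf_neq0.
rewrite exprS in h2.
field.
by rewrite h1 h2 h3 Q0.
Qed.

Lemma HQinv (Q : algC) : (forall k, Q ^+ k.+1 != 1) -> (forall k, (Q^-1) ^+ k.+1 != 1).
Proof. by move=> HQ k; rewrite exprVn invr_eq1. Qed.

Definition wco (Q : algC) (i : nat) := (Q ^+ i - 1)^-1 / i%:R.
Definition sg (s : bool) : algC := if s then 1 else -1.
Definition pc K (Q c : algC) (s : bool) :=
  \poly_(i < K.+1) (sg s * c ^+ i * wco Q i).
Definition ec (Q c : algC) (s : bool) := if s then ecP Q c else ecM Q c.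

Lemma ode_pc K (Q c : algC) s : Q != 0 -> (forall k, Q ^+ k.+1 != 1) ->
  ode K (pc K Q c s) (\poly_(j < K.+1) ec Q c s j).
Proof.
move=> Q0 HQ; case: s => /=.
  apply: (@ode_E K Q c); [exact: HQ | exact: recP | ].
  move=> i iK; rewrite coef_poly ltnS iK /sg /wco.
  have h1 : Q ^+ i.+1 - 1 != 0 by rewrite subr_eq0.
  have h2 : (i.+1%:R : algC) != 0 by rewrite pnatr_eq0.
  have h5 : (1 + i%:R : algC) != 0 by rewrite nat1r pnatr_eq0.
  rewrite -mulr_natr; field.
  by rewrite h1 h5.
apply: (@ode_E K (Q^-1) (c / Q)); [exact: HQinv | exact: recM | ].
move=> i iK; rewrite coef_poly ltnS iK /sg /wco.
have h1 : Q ^+ i.+1 - 1 != 0 by rewrite subr_eq0.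
have h2 : (i.+1%:R : algC) != 0 by rewrite pnatr_eq0.
have h3 : 1 - Q ^+ i.+1 != 0 by rewrite subr_eq0 eq_sym.
have h4 : Q ^+ i.+1 != 0 by rewrite expf_neq0.
have h5 : (1 + i%:R : algC) != 0 by rewrite nat1r pnatr_eq0.
rewrite -mulr_natr !exprVn expr_div_n; field.
by rewrite h4 h5 h1 mulN1r h3.
Qed.

Section Assembly.
Variables (g : nat) (Q : algC) (alpha beta : 'I_g -> algC).

Definition cI (x : 'I_g.+1 * bool) : algC :=
  match unlift ord0 x.1 with
  | Some l => if x.2 then alpha l else beta l
  | None => if x.2 then Q else 1
  end.
Definition sI (x : 'I_g.+1 * bool) : bool :=
  if unlift ord0 x.1 is Some _ then false else true.

Lemma big_pairI (R : Type) (idx : R) (op : Monoid.com_law idx)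
  (G : 'I_g.+1 * bool -> R) :
  \big[op/idx]_(x : 'I_g.+1 * bool) G x =
  \big[op/idx]_(l : 'I_g.+1) op (G (l, true)) (G (l, false)).
Proof.
have -> : \big[op/idx]_(l : 'I_g.+1) op (G (l, true)) (G (l, false)) =
   \big[op/idx]_(l : 'I_g.+1) \big[op/idx]_(b : bool) G (l, b).
  by apply: eq_bigr => l _; rewrite big_bool.
rewrite pair_big /=; apply: eq_big => // [[l b]] _; done.
Qed.

Lemma exp_arg_poly K : exp_arg Q alpha beta K =
  \poly_(i < K.+1) (Nk Q alpha beta i * wco Q i).
Proof.
rewrite /exp_arg poly_def -(big_mkord xpredT (fun i => (Nk Q alpha beta i * wco Q i) *: 'X^i)).
rewrite big_ltn // /wco invr0 !mulr0 scale0r add0r.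
by apply: eq_bigr => i _; rewrite !mulrA.
Qed.

Lemma sum_pc K : \sum_(x : 'I_g.+1 * bool) pc K Q (cI x) (sI x) = exp_arg Q alpha beta K.
Proof.
rewrite exp_arg_poly; apply/polyP => n; rewrite coef_sum !coef_poly.
case: ifP => nK; last by rewrite big1 // => x _; rewrite coef_poly nK.
rewrite (eq_bigr (fun x => sg (sI x) * cI x ^+ n * wco Q n)); last first.
  by move=> x _; rewrite coef_poly nK.
rewrite -mulr_suml; congr (_ * _).
rewrite big_pairI big_ord_recl /cI /sI /= unlift_none.
under eq_bigr => i _ do rewrite liftK.
rewrite /sg /= expr1n !mul1r.
under eq_bigr => i _ do rewrite !mulN1r -opprD.
by rewrite sumrN /Nk.
Qed.

Lemma prod_coef K (E : 'I_g.+1 * bool -> nat -> algC) :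
  (\prod_(x : 'I_g.+1 * bool) \poly_(j < K.+1) E x j)`_K =
  \sum_(f : {ffun 'I_g.+1 * bool -> 'I_K.+1} | (\sum_i (f i : nat))%N == K)
     \prod_x E x (f x).
Proof.
rewrite (eq_bigr (fun x => \sum_(j < K.+1) E x j *: 'X^j)); last first.
  by move=> x _; rewrite poly_def.
rewrite bigA_distr_bigA coef_sum [RHS]big_mkcond /=; apply: eq_bigr => f _.
rewrite (eq_bigr (fun x => (E x (f x))%:P * 'X^(f x))); last first.
  by move=> x _; rewrite mul_polyC.
rewrite big_split /= -rmorph_prod.
rewrite -(big_morph (fun n => 'X^n) (fun m n => exprD 'X m n) (expr0 'X)).
rewrite coefCM coefXn eq_sym; case: eqP => _; [by rewrite mulr1 | by rewrite mulr0].
Qed.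

End Assembly.

Lemma core g (Q : algC) (alpha beta : 'I_g -> algC) K :
  Q != 0 -> (forall k, Q ^+ k.+1 != 1) -> bcoef Q alpha beta K = bsum Q alpha beta K.
Proof.
move=> Q0 HQ.
pose F := \prod_(x : 'I_g.+1 * bool) \poly_(j < K.+1) ec Q (@cI g Q alpha beta x) (@sI g x) j.
have hF : ode K (exp_arg Q alpha beta K) F.
  rewrite -(@sum_pc g Q alpha beta K); apply: ode_prod => x; exact: ode_pc.
have p0 : (exp_arg Q alpha beta K)`_0 = 0.
  by rewrite exp_arg_poly coef_poly /wco invr0 !mulr0.
have hE := ode_exp K _ p0.
have F0 : F`_0 = 1.
  rewrite /F -horner_coef0 horner_prod big1 // => x _.
  rewrite horner_coef0 coef_poly /= /ec.
  by case: (@sI g x); rewrite /ecP /ecM qpoch0 !expr0 ?mul1r invr1 ?mulr1.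
have := @ode_uniq _ _ _ _ hE hF; rewrite expT0 // F0 => /(_ erefl K (leqnn K)).
change (bcoef Q alpha beta K) with ((expT K (exp_arg Q alpha beta K))`_K).
move=> ->; rewrite /F prod_coef /bsum; apply: eq_bigr => f _.
rewrite /bterm big_pairI big_ord_recl /cI /sI /= unlift_none.
under eq_bigr => i _ do rewrite liftK.
rewrite /= /ecP /ecM.
congr (_ * _).
  rewrite addn1 binS bin1 !exprD expr1n invfM; ring.
by apply: eq_bigr => i _; rewrite invfM; ring.
Qed.

Theorem theorem3p3 (q g : nat) (ns : seq nat) (P : {poly algC})
    (alpha beta : 'I_g -> algC) (k : nat) :
  (exists p e : nat, [/\ prime p, (0 < e)%N & q = (p ^ e)%N]) ->
  (0 < size ns)%N -> all (fun n => 0 < n)%N ns ->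
  size P = (2 * g).+1 ->
  P.[0] != 0 ->
  P = P.[0] *: \prod_(l < g) ((1 - alpha l *: 'X) * (1 - beta l *: 'X)) ->
  let Q : algC := (q ^ (\prod_(n <- ns) n))%N%:R in
  bcoef Q alpha beta k = bsum Q alpha beta k.
Proof.
move=> [p [e [pp e0 ->]]] _ Hall _ _ _ Q.
have q1 : (1 < p ^ e)%N.
  have := ltn_expl e (prime_gt1 pp); lia.
have N0' : forall s : seq nat, all (fun n => 0 < n)%N s -> (0 < \prod_(n <- s) n)%N.
  elim=> [|a r IH] /=; first by rewrite big_nil.
  by move/andP=> [a0 /IH h]; rewrite big_cons muln_gt0 a0 h.
have N0 := N0' ns Hall.
have QN1 : (1 < (p ^ e) ^ (\prod_(n <- ns) n))%N.
  have := ltn_expl (\prod_(n <- ns) n) q1; lia.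
apply: core.
  by rewrite /Q pnatr_eq0; lia.
move=> j; rewrite /Q -natrX pnatr_eq1.
have := ltn_expl j.+1 QN1.
rewrite -expnM; lia.
Qed.
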